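(* Let $p\ne q$ be primes, $G=\mathbb{Z}_p^2\times\mathbb{Z}_q^2$, and let $S\subseteq G$ be spectral with $\gcd(|S|,p^2q^2)=pq$ and $pq<|S|<pq\min\{p,q\}$. Then for every nonzero $u\in\mathbb{Z}_p^2$ there is $x_u\in\mathbb{Z}_q^2$ with $\chi_{u+x_u}(S)=0$, and for every nonzero $v\in\mathbb{Z}_q^2$ there is $y_v\in\mathbb{Z}_p^2$ with $\chi_{v+y_v}(S)=0$.
   Context: Elements of $G$ are written $a+b$ with $a\in\mathbb{Z}_p^2$, $b\in\mathbb{Z}_q^2$. For $w=u+v$ define $\chi_w(a+b)=\exp\big(2\pi i(\tfrac{u\cdot a}{p}+\tfrac{v\cdot b}{q})\big)$ and $\chi(S)=\sum_{s\in S}\chi(s)$. $S$ is spectral if there is $\Lambda\subseteq G$ with $|\Lambda|=|S|$ and $\chi_{\lambda-\lambda'}(S)=0$ for all distinct $\lambda,\lambda'\in\Lambda$. *)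

(* Defs.v *)
From mathcomp Require Import all_boot all_order all_algebra.
From mathcomp Require Import reals trigo Rstruct.
From mathcomp Require Import complex.
Import GRing.Theory Num.Theory.
Set Implicit Arguments. Unset Strict Implicit. Unset Printing Implicit Defensive.
Local Open Scope ring_scope.

(* G = Z_p^2 x Z_q^2 ; an element a + b is the pair (a, b). *)
Definition Gp (p q : nat) : finType := (('Z_p * 'Z_p) * ('Z_q * 'Z_q))%type.

Definition cexp2pi (x : Rdefinitions.R) : Rdefinitions.R[i] :=
  (cos (2 * pi * x) +i* sin (2 * pi * x))%C.

Definition dotn (n : nat) (u a : 'Z_n * 'Z_n) : nat :=
  (val u.1 * val a.1 + val u.2 * val a.2)%N.

Definition chi (p q : nat) (w g : Gp p q) : Rdefinitions.R[i] :=
  cexp2pi ((dotn w.1 g.1)%:R / p%:R + (dotn w.2 g.2)%:R / q%:R).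

Definition chiS (p q : nat) (w : Gp p q) (S : {set Gp p q}) : Rdefinitions.R[i] :=
  \sum_(s in S) chi w s.

Definition spectral (p q : nat) (S : {set Gp p q}) : Prop :=
  exists Lam : {set Gp p q}, #|Lam| = #|S| /\
    {in Lam &, forall l l' : Gp p q, l != l' -> chiS (l - l') S = 0}.

(* Main.v *)
Require Import Defs.
From mathcomp Require Import all_boot all_order all_algebra all_field.
From mathcomp Require Import reals trigo Rstruct.
From mathcomp Require Import complex.
From mathcomp Require Import ring lra.
Import Order.TTheory GRing.Theory Num.Theory.
Local Open Scope ring_scope.
Import trigo.
Section Gal.
Variable F : numFieldType.

Lemma Phi_root n (w : F) : n.-primitive_root w -> root (map_poly intr 'Phi_n) w.
Proof.
move=> pw; have n0 := prim_order_gt0 pw.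
have : root (map_poly (intr : int -> F) ('X^n - 1)) w.
  by rewrite rmorphB rmorph1 /= map_polyXn rootE !hornerE prim_expr_order // subrr.
rewrite -prod_Cyclotomic // rmorph_prod /= rootE horner_prod prodf_seq_eq0.
case/hasP => d dd /= rd.
have dn : (d %| n)%N by rewrite dvdn_divisors.
have d0 : (0 < d)%N by apply: dvdn_gt0 dn.
have [Edn|dne] := eqVneq d n; first by move: rd; rewrite Edn rootE.
have : root (map_poly (intr : int -> F) ('X^d - 1)) w.
  rewrite -prod_Cyclotomic // rmorph_prod /= rootE horner_prod prodf_seq_eq0.
  by apply/hasP; exists d => //; rewrite -dvdn_divisors.
rewrite rmorphB rmorph1 /= map_polyXn rootE !hornerE subr_eq0 => /eqP wd.
have := prim_order_dvd pw d; rewrite wd eqxx => /(dvdn_leq d0) nd.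
have := dvdn_leq n0 dn => dn'.
by move: dne; rewrite eqn_leq nd dn'.
Qed.

Lemma Phi_dvd n (w : F) (P : {poly rat}) : n.-primitive_root w ->
  root (map_poly ratr P) w -> map_poly intr 'Phi_n %| P.
Proof.
move=> pw rP; have n0 := prim_order_gt0 pw.
set Phi := map_poly (intr : int -> rat) 'Phi_n.
have PhiF : map_poly (ratr : rat -> F) Phi = map_poly intr 'Phi_n.
  by rewrite -map_poly_comp; apply: eq_map_poly => x /=; rewrite ratr_int.
have PhiC : map_poly (ratr : rat -> algC) Phi = map_poly intr 'Phi_n.
  by rewrite -map_poly_comp; apply: eq_map_poly => x /=; rewrite ratr_int.
have Phi0 : Phi != 0.
  by apply: monic_neq0; apply: monic_map; apply: Cyclotomic_monic.
set g := gcdp P Phi.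
have rg : root (map_poly (ratr : rat -> F) g) w.
  by rewrite gcdp_map root_gcd rP PhiF Phi_root.
have g0 : g != 0 by rewrite gcdp_eq0 negb_and Phi0 orbT.
have sg : (1 < size g)%N.
  rewrite -(size_map_poly (ratr : {rmorphism rat -> F})).
  by apply: root_size_gt1 rg; rewrite map_poly_eq0.
have [r rr] : exists r : algC, root (map_poly ratr g) r.
  by apply/closed_rootP; rewrite size_map_poly neq_ltn sg orbT.
have [z pz] := C_prim_root_exists n0.
have rPhi : root (cyclotomic z n) r.
  have := dvdp_gcdr P Phi; rewrite -/g -(dvdp_map (ratr : {rmorphism rat -> algC})).
  case/dvdpP => h Dh; rewrite -(Cintr_Cyclotomic pz) -PhiC Dh rootM rr orbT //.
rewrite root_cyclotomic // in rPhi.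
have [pf [Dpf _] Hpf] := minCpolyP r.
have : pf %| g by rewrite -Hpf.
have -> : pf = Phi.
  apply: (map_inj_poly (fmorph_inj (ratr : {rmorphism rat -> algC}))); first by rewrite rmorph0.
  by rewrite -Dpf PhiC (minCpoly_cyclotomic rPhi) (Cintr_Cyclotomic rPhi).
by move=> /dvdp_trans; apply; apply: dvdp_gcdl.
Qed.

Lemma galois_sum (T : finType) (A : {set T}) (E : T -> nat) n k (w : F) :
  n.-primitive_root w -> coprime k n ->
  \sum_(s in A) w ^+ E s = 0 -> \sum_(s in A) w ^+ (k * E s) = 0.
Proof.
move=> pw ck H.
set P : {poly rat} := \sum_(s in A) 'X^(E s).
have ev x : (map_poly (ratr : rat -> F) P).[x] = \sum_(s in A) x ^+ E s.
  rewrite /P rmorph_sum horner_sum; apply: eq_bigr => s _.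
  by rewrite /= map_polyXn hornerXn.
have /dvdpP [Q DQ] : map_poly intr 'Phi_n %| P by apply: (@Phi_dvd n w P pw); rewrite rootE ev H.
have := ev (w ^+ k); rewrite DQ rmorphM /= hornerM.
have -> : map_poly (ratr : rat -> F) (map_poly (intr : int -> rat) 'Phi_n) = map_poly intr 'Phi_n.
  by rewrite -map_poly_comp; apply: eq_map_poly => x /=; rewrite ratr_int.
have := @Phi_root n (w ^+ k); rewrite prim_root_exp_coprime // => /(_ ck) /eqP ->.
rewrite mulr0 => /esym H2; rewrite -[RHS]H2; apply: eq_bigr => s _; by rewrite exprM.
Qed.
End Gal.
Notation RR := Rdefinitions.R.
Lemma cexp2piD (x y : RR) : cexp2pi (x + y) = cexp2pi x * cexp2pi y.
Proof. by rewrite /cexp2pi mulrDr cosD sinD; simpc; rewrite [_ * sin _ + _]addrC. Qed.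

Lemma cexp2pi0 : cexp2pi 0 = 1.
Proof. by rewrite /cexp2pi mulr0 cos0 sin0. Qed.

Lemma cexp2pi1 : cexp2pi 1 = 1.
Proof. by rewrite /cexp2pi mulr1 mulr_natl cos2pi sin2pi. Qed.

Lemma cexp2piX (x : RR) m : cexp2pi x ^+ m = cexp2pi (x *+ m).
Proof.
elim: m => [|m IH]; first by rewrite expr0 mulr0n cexp2pi0.
by rewrite exprS IH mulrS cexp2piD.
Qed.

Lemma cexp2pi_nat m : cexp2pi m%:R = 1.
Proof. by rewrite -[m%:R]mulr1 mulr_natl -cexp2piX cexp2pi1 expr1n. Qed.

Lemma cexp2pi_neq1 (x : RR) : 0 < x < 1 -> cexp2pi x != 1.
Proof.
case/andP => x0 x1; apply/negP => /eqP [] Hc Hs.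
have pi0 : 0 < pi :> RR := pi_gt0 RR.
have [lt|gt|eq] := ltrgtP (2 * pi * x) pi.
- have : 0 < sin (2 * pi * x) by apply: sin_gt0_pi; rewrite lt mulr_gt0 // mulr_gt0.
  by rewrite Hs ltxx.
- have : 0 < sin (2 * pi * x - pi).
    apply: sin_gt0_pi; rewrite subr_gt0 gt /= ltrBlDr -mulr2n -mulr_natl.
    by rewrite -mulr_natl; nra.
  have := sinDpi (2 * pi * x - pi); rewrite subrK Hs => /esym/eqP.
  by rewrite oppr_eq0 => /eqP ->; rewrite ltxx.
- by move: Hc; rewrite eq cospi => /eqP; rewrite -subr_eq0 -opprD oppr_eq0 -(natrD _ 1 1) pnatr_eq0.
Qed.

Definition zeta (n : nat) : RR[i] := cexp2pi (n%:R^-1).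

Lemma zetaX n m : zeta n ^+ m = cexp2pi (m%:R / n%:R).
Proof. by rewrite /zeta cexp2piX; congr cexp2pi; rewrite mulrC mulr_natr. Qed.

Lemma zeta_prim n : (0 < n)%N -> n.-primitive_root (zeta n).
Proof.
move=> n0; apply/andP; split => //; apply/forallP => i; apply/eqP.
rewrite unity_rootE zetaX.
have [Ei|Ni] := eqVneq i.+1 n.
  by rewrite Ei divff ?pnatr_eq0 -?lt0n // cexp2pi1 !eqxx.
apply/negbTE; apply: cexp2pi_neq1.
have n0' : 0 < n%:R :> RR by rewrite ltr0n.
rewrite divr_gt0 ?ltr0n //= ltr_pdivrMr // mul1r ltr_nat ltn_neqAle Ni.
by have := ltn_ord i.
Qed.
Set Implicit Arguments. Unset Strict Implicit.
Arguments galois_sum {F T A E n k w}. Arguments zeta_prim {n}. Arguments Phi_root {F n w}. Arguments Phi_dvd {F n w P}.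
Lemma chiE p q (w g : Gp p q) : (0 < p)%N -> (0 < q)%N ->
  chi w g = zeta (p * q) ^+ (dotn w.1 g.1 * q + dotn w.2 g.2 * p).
Proof.
move=> p0 q0; rewrite /chi zetaX; congr cexp2pi.
have hp : p%:R != 0 :> RR by rewrite pnatr_eq0 -lt0n.
have hq : q%:R != 0 :> RR by rewrite pnatr_eq0 -lt0n.
rewrite natrD !natrM; field; by rewrite hp hq.
Qed.

Definition sc r (c : 'Z_r) (a : 'Z_r * 'Z_r) : 'Z_r * 'Z_r := (c * a.1, c * a.2).

Lemma dotn_sc r (c : 'Z_r) a b : (1 < r)%N ->
  dotn (sc c a) b = val c * dotn a b %[mod r].
Proof.
move=> r1; rewrite /dotn /=.
have h (x : nat) : (x %% (Zp_trunc r).+2 = x %% r)%N by rewrite Zp_cast.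
rewrite !h.
by rewrite -modnDm !modnMml modnDm mulnDr !mulnA.
Qed.

Lemma Zp_lt r (c : 'Z_r) : (1 < r)%N -> (val c < r)%N.
Proof. by move=> r1; apply: (leq_trans (ltn_ord c)); rewrite Zp_cast. Qed.

Lemma Zp_coprime r (c : 'Z_r) : prime r -> c != 0 -> coprime (val c) r.
Proof.
move=> pr c0; rewrite coprime_sym prime_coprime //; apply/negP => /dvdn_leq.
have c0' : (0 < val c)%N by rewrite lt0n; apply: contra c0 => /eqP h; apply/eqP/val_inj.
move=> /(_ c0'); have := Zp_lt c (prime_gt1 pr).
by move=> h1 h2; have := leq_ltn_trans h2 h1; rewrite ltnn.
Qed.

Lemma modDMr x y m : ((x + y * m) %% m = x %% m)%N.
Proof. by rewrite -modnDm modnMl addn0 modn_mod. Qed.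

Lemma chiS_scale p q (S : {set Gp p q}) a b (c : 'Z_p) (d : 'Z_q) :
  prime p -> prime q -> p != q -> c != 0 -> d != 0 ->
  chiS ((a, b) : Gp p q) S = 0 -> chiS ((sc c a, sc d b) : Gp p q) S = 0.
Proof.
move=> pp pq npq c0 d0.
have p1 := prime_gt1 pp; have q1 := prime_gt1 pq.
have p0 := prime_gt0 pp; have q0 := prime_gt0 pq.
have cpq : coprime p q by rewrite prime_coprime // dvdn_prime2.
set k := chinese p q (val c) (val d).
have kp : k = val c %[mod p] by apply: chinese_modl.
have kq : k = val d %[mod q] by apply: chinese_modr.
have ck : coprime k (p * q).
  rewrite coprimeMr -(coprime_modl k p) -(coprime_modl k q) kp kq !coprime_modl.
  by rewrite !Zp_coprime.
rewrite /chiS; under eq_bigr do rewrite chiE //.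
have pq0 : (0 < p * q)%N by rewrite muln_gt0 p0 q0.
move=> H; have := galois_sum (zeta_prim pq0) ck H.
move=> H2; rewrite -[RHS]H2; apply: eq_bigr => s _ /=; apply/eqP.
rewrite chiE // (eq_prim_root_expr (zeta_prim pq0)) eq_sym.
rewrite chinese_remainder //; apply/andP; split; apply/eqP.
- rewrite /= mulnDr mulnA (mulnA k _ p) !modDMr.
  rewrite -modnMml -(modnMml (dotn (sc c a) s.1)); congr ((_ * q) %% p)%N.
  by rewrite dotn_sc // -modnMml kp modnMml.
- rewrite /= mulnDr mulnA (mulnA k _ p) (addnC (k * _ * q)) (addnC (dotn _ _ * q)) !modDMr.
  rewrite -modnMml -(modnMml (dotn (sc d b) s.2)); congr ((_ * p) %% q)%N.
  by rewrite dotn_sc // -modnMml kq modnMml.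
Qed.
Lemma sum_Zp (V : nmodType) q (f : nat -> V) : (1 < q)%N ->
  \sum_(j : 'Z_q) f (val j) = \sum_(i < q) f i.
Proof. by move=> q1; rewrite -(big_mkord xpredT f) Zp_cast // big_mkord. Qed.

Lemma sum_zeta_pow q x : prime q -> (x < q)%N ->
  \sum_(j : 'Z_q) zeta q ^+ (val j * x) = if x == 0%N then q%:R else 0.
Proof.
move=> pq xq; have q1 := prime_gt1 pq; have q0 := prime_gt0 pq.
rewrite (sum_Zp (fun i => zeta q ^+ (i * x))) //.
have [->|x0] := eqVneq x 0%N.
  by under eq_bigr do rewrite muln0 expr0; rewrite sumr_const card_ord.
under eq_bigr do rewrite mulnC exprM.
set y := zeta q ^+ x.
have y1 : y != 1.
  rewrite /y -(prim_order_dvd (zeta_prim q0)); apply/negP => /(dvdn_leq _).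
  by rewrite lt0n x0 => /(_ isT); rewrite leqNgt xq.
have : y ^+ q - 1 = 0 by rewrite /y -exprM mulnC exprM (prim_expr_order (zeta_prim q0)) expr1n subrr.
rewrite subrX1 => /eqP; rewrite mulf_eq0 subr_eq0 (negbTE y1) /= => /eqP.
by [].
Qed.

Lemma orth q (s2 : 'Z_q * 'Z_q) : prime q ->
  \sum_(e : 'Z_q * 'Z_q) zeta q ^+ (dotn e s2) = if s2 == 0 then (q ^ 2)%:R else 0.
Proof.
move=> pq; have q1 := prime_gt1 pq.
rewrite -(pair_bigA _ (fun e1 e2 => zeta q ^+ dotn (e1, e2) s2)) /=.
under eq_bigr do under eq_bigr do rewrite /dotn /= exprD.
under eq_bigr do rewrite -mulr_sumr.
rewrite -mulr_suml !sum_zeta_pow // ?Zp_lt //.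
case: s2 => a b /=.
have e0 (z : 'Z_q) : (val z == 0%N) = (z == 0) by [].
rewrite !e0 xpair_eqE.
case: (a == 0); case: (b == 0); rewrite /= ?mulr0 ?mul0r //.
by rewrite -natrM expnS expn1.
Qed.

Lemma chi0E p q (e : 'Z_q * 'Z_q) (s : Gp p q) : (0 < p)%N -> (0 < q)%N ->
  chi ((0, e) : Gp p q) s = zeta q ^+ (dotn e s.2).
Proof.
move=> p0 q0; rewrite /chi zetaX /=; congr cexp2pi.
by rewrite /dotn /= !mul0n add0n mul0r add0r.
Qed.

Lemma q2_dvd p q (S : {set Gp p q}) : prime p -> prime q ->
  (forall e : 'Z_q * 'Z_q, e != 0 -> chiS ((0, e) : Gp p q) S = 0) ->
  (q ^ 2 %| #|S|)%N.
Proof.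
move=> pp pq H; have p0 := prime_gt0 pp; have q0 := prime_gt0 pq.
have E1 : \sum_(e : 'Z_q * 'Z_q) chiS ((0, e) : Gp p q) S = #|S|%:R.
  rewrite (bigD1 (0 : 'Z_q * 'Z_q)) //= big1 ?addr0; last by move=> e /H.
  rewrite /chiS; under eq_bigr do rewrite chi0E //.
  rewrite -[RHS]mulr1n -sumr_const; apply: eq_bigr => s _.
  by rewrite /dotn /= !mul0n expr0.
have E2 : \sum_(e : 'Z_q * 'Z_q) chiS ((0, e) : Gp p q) S =
     (q ^ 2 * #|[set s in S | s.2 == 0]|)%:R.
  rewrite /chiS exchange_big /=.
  under eq_bigr do (under eq_bigr do rewrite chi0E //; rewrite orth //).
  rewrite -big_mkcondr /= sumr_const natrM mulr_natr.
  congr (_ *+ _); apply: eq_card => s; by rewrite !inE.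
move: E2; rewrite E1 => /eqP; rewrite eqr_nat => /eqP ->.
by apply: dvdn_mulr.
Qed.
Definition det r (u a : 'Z_r * 'Z_r) : 'Z_r := u.1 * a.2 - u.2 * a.1.

Lemma detB r (u a b : 'Z_r * 'Z_r) : det u (a - b) = det u a - det u b.
Proof. by case: a b => [a1 a2] [b1 b2]; rewrite /det /=; ring. Qed.

Lemma Zp_unit r (x : 'Z_r) : prime r -> x != 0 -> x \is a GRing.unit.
Proof.
move=> pr x0; rewrite -(natr_Zp x) unitZpE ?prime_gt1 // coprime_sym.
exact: Zp_coprime.
Qed.

Lemma det0 r (u a : 'Z_r * 'Z_r) : prime r -> u != 0 -> det u a = 0 ->
  exists c, a = sc c u.
Proof.
move=> pr; case: u a => u1 u2 [a1 a2]; rewrite /det /sc /= => u0 /eqP.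
rewrite subr_eq0 => /eqP E.
have [u10|u1n] := eqVneq u1 0.
  have u2n : u2 != 0 by apply: contra u0 => /eqP u20; rewrite u10 u20.
  have Uu2 := Zp_unit pr u2n.
  have a10 : a1 = 0 by rewrite -[a1](mulKr Uu2) -E u10 !mul0r mulr0.
  exists (a2 / u2); by rewrite a10 u10 mulr0 divrK.
have Uu1 := Zp_unit pr u1n.
exists (a1 / u1); rewrite divrK //; congr (_, _).
by rewrite -[a2](mulKr Uu1) E mulrA mulrC mulrA.
Qed.

Lemma pigeon r (T : finType) (A : {set T}) (f : T -> 'Z_r) m : (1 < r)%N ->
  (r * m < #|A|)%N -> exists y, (m < #|[set x in A | f x == y]|)%N.
Proof.
move=> r1 Hm.
have [y Hy|none] := pickP (fun y => m < #|[set x in A | f x == y]|)%N.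
  by exists y.
move: Hm; rewrite -sum1_card (partition_big f xpredT) //=.
have -> : (r * m = \sum_(y : 'Z_r) m)%N by rewrite sum_nat_const card_ord Zp_cast // mulnC.
rewrite ltnNge => /negP H; exfalso; apply: H; apply: leq_sum => y _.
have := none y; rewrite /= ltnNge => /negbFE.
by rewrite sum1dep_card; apply: leq_trans; apply: subset_leq_card; apply/subsetP => x; rewrite !inE.
Qed.

Lemma dir p q (S : {set Gp p q}) (B : {set 'Z_q * 'Z_q}) :
  prime p -> prime q -> p != q -> (q < #|B|)%N ->
  {in B &, forall b b', b != b' -> chiS ((0, b - b') : Gp p q) S = 0} ->
  forall e, e != 0 -> chiS ((0, e) : Gp p q) S = 0.
Proof.
move=> pp pq npq Bq HB e e0.
have q1 := prime_gt1 pq.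
have [y Hy] : exists y, (1 < #|[set x in B | det e x == y]|)%N.
  by apply: pigeon => //; rewrite muln1.
have [b [b' [bi b'i ne]]] := card_gt1P Hy.
move: bi b'i; rewrite !inE => /andP [bB /eqP hb] /andP [b'B /eqP hb'].
have : det e (b - b') = 0.
  by rewrite detB hb hb' subrr.
move/(det0 pq e0) => [t Dt].
have t0 : t != 0.
  apply: contra ne => /eqP t0; move: Dt; rewrite t0 /sc /= !mul0r => /eqP.
  by rewrite subr_eq0.
have := HB _ _ bB b'B ne; rewrite Dt => H.
have := chiS_scale (a := 0) (c := 1) (d := t^-1) pp pq npq (oner_neq0 _) _ H.
rewrite invr_eq0 t0 => /(_ isT).
have -> : sc 1 (0 : 'Z_p * 'Z_p) = 0 by rewrite /sc /= mulr0.
have -> // : sc t^-1 (sc t e) = e.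
by clear -pq t0; case: e => e1 e2; rewrite /sc /= !mulKr ?Zp_unit.
Qed.
Lemma part1 p q (S : {set Gp p q}) : prime p -> prime q -> p != q ->
  spectral S -> ~~ (q ^ 2 %| #|S|)%N -> (p * q < #|S|)%N ->
  forall u : 'Z_p * 'Z_p, u != 0 ->
     exists x : 'Z_q * 'Z_q, chiS ((u, x) : Gp p q) S = 0.
Proof.
move=> pp pq npq [L [cL HL]] nq Sbig u u0.
have p1 := prime_gt1 pp.
have [y Hy] : exists y, (q < #|[set l in L | det u (l : Gp p q).1 == y]|)%N.
  by apply: pigeon => //; rewrite cL.
set C := [set l in L | det u (l : Gp p q).1 == y] in Hy.
have CL l : l \in C -> l \in L by rewrite inE => /andP[].
have Cy l : l \in C -> det u l.1 = y by rewrite inE => /andP[_ /eqP].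
have subE (l l' : Gp p q) : l - l' = (l.1 - l'.1, l.2 - l'.2) by case: l l' => [? ?] [? ?].
case: (boolP [exists l in C, exists l' in C, (l : Gp p q).1 != l'.1]).
  case/exists_inP => l lC /exists_inP [l' l'C ne].
  have ll' : l != l' by apply: contra ne => /eqP ->.
  have := HL _ _ (CL _ lC) (CL _ l'C) ll'; rewrite subE.
  have : det u (l.1 - l'.1) = 0 by rewrite detB !Cy ?subrr.
  move/(det0 pp u0) => [c Dc]; rewrite Dc => H.
  have c0 : c != 0.
    apply: contra ne => /eqP c0; move: Dc; rewrite c0 /sc /= !mul0r => /eqP.
    by rewrite subr_eq0.
  have := chiS_scale (c := c^-1) (d := 1) pp pq npq _ (oner_neq0 _) H.
  rewrite invr_eq0 c0 => /(_ isT).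
  have -> : sc c^-1 (sc c u) = u.
    by clear -pp c0; case: u => e1 e2; rewrite /sc /= !mulKr ?Zp_unit.
  by move=> H2; eexists; apply: H2.
move=> /exists_inPn same.
have same' l l' : l \in C -> l' \in C -> (l : Gp p q).1 = l'.1.
  move=> lC l'C; have /exists_inPn := same _ lC.
  by move=> /(_ _ l'C); rewrite negbK => /eqP.
exfalso; move/negP: nq; apply.
apply: (q2_dvd pp pq).
apply: (dir (B := [set (l : Gp p q).2 | l in C])) => //.
  rewrite card_in_imset //.
  move=> l l' lC l'C /= E; have := same' _ _ lC l'C.
  by case: l l' {lC l'C} E => [? ?] [? ?] /= -> ->.
move=> b b' /imsetP [l lC ->] /imsetP [l' l'C ->] ne.
have ll' : l != l' by apply: contra ne => /eqP ->.
have := HL _ _ (CL _ lC) (CL _ l'C) ll'.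
by rewrite subE (same' _ _ lC l'C) subrr.
Qed.

Definition swapG p q (g : Gp p q) : Gp q p := (g.2, g.1).
Arguments swapG {p q}.

Lemma swapGK p q (g : Gp p q) : swapG (swapG g) = g.
Proof. by case: g. Qed.

Lemma chiS_swap p q (w : Gp p q) (S : {set Gp p q}) :
  chiS (swapG w) (swapG @: S) = chiS w S.
Proof.
rewrite /chiS big_imset /=; last by move=> x y _ _ /(congr1 (@swapG q p)); rewrite !swapGK.
by apply: eq_bigr => s _; rewrite /chi /= addrC.
Qed.

Lemma spectral_swap p q (S : {set Gp p q}) : spectral S -> spectral (swapG @: S).
Proof.
have inj : injective (@swapG p q) by move=> x y /(congr1 (@swapG q p)); rewrite !swapGK.
move=> [L [cL HL]]; exists (swapG @: L); split.
  by rewrite !card_imset.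
move=> l l' /imsetP [m mL ->] /imsetP [m' m'L ->] ne.
have -> : swapG m - swapG m' = swapG (m - m') by case: m m' {mL m'L ne} => [? ?] [? ?].
rewrite chiS_swap; apply: HL => //.
by apply: contra ne => /eqP ->.
Qed.

Lemma not_sq p q n : prime p -> prime q -> p != q ->
  gcdn n (p ^ 2 * q ^ 2) = (p * q)%N -> ~~ (q ^ 2 %| n)%N.
Proof.
move=> pp pq npq g; apply/negP => H.
have : (q ^ 2 %| p * q)%N by rewrite -g dvdn_gcd H dvdn_mull.
rewrite expnS expn1 dvdn_pmul2r ?prime_gt0 // dvdn_prime2 //.
by rewrite eq_sym (negbTE npq).
Qed.

Theorem lemma4p6 (p q : nat) (S : {set Gp p q}) :
  prime p -> prime q -> p != q ->
  spectral S ->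
  gcdn #|S| (p ^ 2 * q ^ 2) = (p * q)%N ->
  (p * q < #|S|)%N -> (#|S| < p * q * minn p q)%N ->
  (forall u : 'Z_p * 'Z_p, u != 0 ->
     exists x : 'Z_q * 'Z_q, chiS ((u, x) : Gp p q) S = 0) /\
  (forall v : 'Z_q * 'Z_q, v != 0 ->
     exists y : 'Z_p * 'Z_p, chiS ((y, v) : Gp p q) S = 0).
Proof.
move=> pp pq npq spS g Sbig _; split.
  by apply: part1 => //; apply: not_sq g.
have inj : injective (@swapG p q) by move=> x y /(congr1 (@swapG q p)); rewrite !swapGK.
have cS : #|swapG @: S| = #|S| by rewrite card_imset.
move=> v v0.
have := @part1 q p (swapG @: S) pq pp _ (spectral_swap spS) _ _ v v0.
case=> //.
- by rewrite eq_sym.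
- rewrite cS; apply: (not_sq pq pp); [by rewrite eq_sym | by rewrite mulnC g mulnC].
- by rewrite cS mulnC.
move=> y H; exists y; rewrite -(chiS_swap ((y, v) : Gp p q)); exact: H.
Qed.
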